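(* Let $n\ge 0$ and $k$ be integers, $\rho\ne0$ real and $0\le q<1$. Writing $B_{n,\rho,q}^{(k)}=B_{n,\rho,q}^{(k)}(0)$, we have $$B_{n,\rho,q}^{(k)}=\sum_{m=0}^n S_2(n,m)\frac{(-\rho)^{n-m}\,m!}{[m+1]_q^k},$$ where $S_2(n,m)$ are the Stirling numbers of the second kind.
   Context: For real $0\le q<1$ (with $0^0=1$), $[x]_q=\frac{1-q^x}{1-q}$. ${\rm Li}_{k,q}(w)=\sum_{m\ge1} w^m/[m]_q^k$. The $q$-poly-Bernoulli polynomials with parameter $\rho$ are defined by the formal power series identity in $t$: $\frac{\rho}{1-e^{-\rho t}}{\rm Li}_{k,q}\left(\frac{1-e^{-\rho t}}{\rho}\right)e^{-tz}=\sum_{n\ge0} B_{n,\rho,q}^{(k)}(z)\frac{t^n}{n!}$. *)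

(* Defs.v *)
From Stdlib Require Import Reals List ZArith.
Import ListNotations.
Open Scope R_scope.

Fixpoint sumR (n : nat) (f : nat -> R) : R :=
  match n with
  | O => 0
  | S n' => sumR n' f + f n'
  end.

Definition qnum (q : R) (x : nat) : R := (1 - q ^ x) / (1 - q).

Fixpoint S2 (n m : nat) : nat :=
  match n, m with
  | O, O => 1%nat
  | O, S _ => 0%nat
  | S _, O => 0%nat
  | S n', S m' => (S m' * S2 n' (S m') + S2 n' m')%nat
  end.

Definition ser := nat -> R.
Definition sone : ser := fun n => match n with O => 1 | _ => 0 end.
Definition smul (a b : ser) : ser :=
  fun n => sumR (S n) (fun i => a i * b (n - i)%nat).
Fixpoint spow (a : ser) (m : nat) : ser :=
  match m with O => sone | S m' => smul a (spow a m') end.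
Definition sexp (c : R) : ser := fun n => c ^ n / INR (fact n).
(* composition sum_m c_m w(t)^m, for w with zero constant term
   (only m <= n contribute to the coefficient of t^n) *)
Definition scomp (c : nat -> R) (w : ser) : ser :=
  fun n => sumR (S n) (fun m => c m * spow w m n).
(* division by t of a series with zero constant term *)
Definition sshift (a : ser) : ser := fun n => a (S n).
(* multiplicative inverse of a series with nonzero constant term *)
Fixpoint sinv_list (a : ser) (n : nat) : list R :=
  match n with
  | O => [/ a O]
  | S n' => let l := sinv_list a n' in
            l ++ [- / a O * sumR n (fun i => a (S i) * nth (n' - i)%nat l 0)]
  end.
Definition sinv (a : ser) : ser := fun n => nth n (sinv_list a n) 0.

(* Li_{k,q}(w) = sum_{m>=1} w^m / [m]_q^k, k an integer *)
Definition Li_coef (k : Z) (q : R) (m : nat) : R :=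
  match m with O => 0 | _ => / powerRZ (qnum q m) k end.
Definition Li_ser (k : Z) (q : R) (w : ser) : ser := scomp (Li_coef k q) w.

Definition wser (rho : R) : ser := fun n => (sone n - sexp (- rho) n) / rho.

(* The generating function  rho/(1-e^{-rho t}) Li_{k,q}(w(t)) e^{-t z}.
   Since w(t) = t * (w(t)/t) with w(t)/t having constant term 1, and
   Li(w) has zero constant term, the (a priori Laurent) product equals
   (w/t)^{-1} * (Li(w)/t) * e^{-tz}, a genuine power series. *)
Definition qPB_gen (k : Z) (rho q z : R) : ser :=
  smul (smul (sinv (sshift (wser rho))) (sshift (Li_ser k q (wser rho))))
       (sexp (- z)).

Definition qPB (n : nat) (k : Z) (rho q z : R) : R :=
  INR (fact n) * qPB_gen k rho q z n.

(* Main.v *)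
Require Import Defs.
From Stdlib Require Import Reals ZArith List FunctionalExtensionality.
From mathcomp Require Import all_boot all_algebra ring zify.
From mathcomp Require Import Rstruct.
Import GRing.Theory Num.Theory.
Local Open Scope ring_scope.

Lemma sumRE n f : sumR n f = \sum_(i < n) f i.
Proof. elim: n => [|n IH] /=; [by rewrite big_ord0 | by rewrite big_ord_recr /= IH]. Qed.

Lemma smulE a b n : smul a b n = \sum_(i < n.+1) a i * b (n - i)%N.
Proof. by rewrite /smul sumRE. Qed.

Definition P N (a : ser) : {poly R} := \poly_(i < N) a i.

Lemma Pc N a i : (i < N)%N -> (P N a)`_i = a i.
Proof. by move=> h; rewrite coef_poly h. Qed.

Lemma smul_poly N a b n : (n < N)%N -> smul a b n = (P N a * P N b)`_n.
Proof.
move=> hn; rewrite smulE coefM; apply: eq_bigr => i _.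
have hi := ltn_ord i.
rewrite !Pc //; lia.
Qed.

Lemma smulC a b : smul a b = smul b a.
Proof. apply: functional_extensionality => n; by rewrite !(smul_poly n.+1) // mulrC. Qed.

Lemma smulA a b c : smul (smul a b) c = smul a (smul b c).
Proof.
apply: functional_extensionality => n.
transitivity (((P n.+1 a * P n.+1 b) * P n.+1 c)`_n).
  rewrite smulE coefM; apply: eq_bigr => i _.
  have hi := ltn_ord i.
  rewrite (smul_poly n.+1) ?Pc //; lia.
rewrite -mulrA smulE coefM; apply: eq_bigr => i _.
have hi := ltn_ord i.
rewrite [X in _ = _ * X](smul_poly n.+1) ?Pc //; lia.
Qed.

Definition sadd (a b : ser) : ser := fun n => a n + b n.
Definition sscal (r : R) (a : ser) : ser := fun n => r * a n.
Definition sder (a : ser) : ser := fun n => n.+1%:R * a n.+1.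

Lemma smul1l a : smul sone a = a.
Proof.
apply: functional_extensionality => n.
rewrite smulE big_ord_recl big1 => [|i _] /=; last by rewrite mul0r.
by rewrite subn0 addr0 mul1r.
Qed.

Lemma smul1r a : smul a sone = a.
Proof. by rewrite smulC smul1l. Qed.

Lemma smulDr a b c : smul a (sadd b c) = sadd (smul a b) (smul a c).
Proof.
apply: functional_extensionality => n.
rewrite /sadd !smulE -big_split /=; apply: eq_bigr => i _; by rewrite mulrDr.
Qed.

Lemma smulZr a r b : smul a (sscal r b) = sscal r (smul a b).
Proof.
apply: functional_extensionality => n.
rewrite /sscal !smulE mulr_sumr; apply: eq_bigr => i _; by rewrite mulrCA.
Qed.

Lemma smulZl a r b : smul (sscal r a) b = sscal r (smul a b).
Proof. by rewrite smulC smulZr smulC. Qed.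

Lemma smul_shift a b n : a 0%N = 0 -> smul a b n.+1 = smul (sshift a) b n.
Proof.
move=> ha; rewrite !smulE big_ord_recl ha mul0r add0r; apply: eq_bigr => i _ /=.
by rewrite subSS.
Qed.

Lemma sder_mul a b : sder (smul a b) = sadd (smul (sder a) b) (smul a (sder b)).
Proof.
apply: functional_extensionality => n.
rewrite /sadd /sder !smulE mulr_sumr.
transitivity (\sum_(i < n.+2) (i%:R * (a i * b (n.+1 - i)%N))
            + \sum_(i < n.+2) ((n.+1 - i)%:R * (a i * b (n.+1 - i)%N))).
  rewrite -big_split /=; apply: eq_bigr => i _.
  have hi := ltn_ord i.
  rewrite -mulrDl -natrD; congr (_%:R * _); lia.
congr (_ + _).
  rewrite big_ord_recl /= mul0r add0r; apply: eq_bigr => i _ /=.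
  rewrite subSS /bump /=; ring.
rewrite big_ord_recr /= subnn mul0r addr0; apply: eq_bigr => i _ /=.
have hi := ltn_ord i.
have -> : (n.+1 - i = (n - i).+1)%N by lia.
ring.
Qed.

Lemma spow_low w : w 0%N = 0 -> forall m j, (j < m)%N -> spow w m j = 0.
Proof.
move=> hw; elim=> [|m IH] j hj //=.
rewrite smulE big1 // => -[[|i] hi] _ /=; first by rewrite hw mul0r.
rewrite IH ?mulr0 //; lia.
Qed.

Lemma sinv_list_len a n : length (sinv_list a n) = n.+1.
Proof. elim: n => [|n IH] //=; rewrite length_app IH /=; lia. Qed.

Lemma sinv_list_nth a n j : (j <= n)%N -> List.nth j (sinv_list a n) 0 = sinv a j.
Proof.
elim: n j => [|n IH] j hj.
  by have -> : j = 0%N by lia.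
case: (ltnP j n.+1) => h.
  rewrite /= app_nth1; first by apply: IH.
  rewrite sinv_list_len; lia.
by have -> : j = n.+1 by lia.
Qed.

Lemma sinv_S a n : sinv a n.+1 = - (a 0%N)^-1 * \sum_(i < n.+1) a i.+1 * sinv a (n - i)%N.
Proof.
rewrite {1}/sinv; cbn [sinv_list].
rewrite app_nth2 sinv_list_len // Nat.sub_diag sumRE.
congr (_ * _); apply: eq_bigr => i _; rewrite sinv_list_nth //; lia.
Qed.

Lemma smul_sinv a : a 0%N <> 0 -> smul a (sinv a) = sone.
Proof.
move=> /eqP ha; apply: functional_extensionality => -[|n].
  rewrite smulE big_ord1 /= /sinv /=; exact: mulfV.
rewrite smulE big_ord_recl sinv_S /=.
rewrite [X in _ + X](eq_bigr (fun i : 'I_n.+1 => a i.+1 * sinv a (n - i)%N)); last first.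
  by move=> i _; rewrite /bump /= subSS.
rewrite R0E; field. exact: ha.
Qed.

Lemma w0 rho : rho <> 0 -> wser rho 0%N = 0.
Proof. move=> /eqP h; rewrite /wser /sexp /= !RealsE. field. exact: h. Qed.

Lemma v0 rho : rho <> 0 -> sshift (wser rho) 0%N = 1.
Proof. move=> /eqP h; rewrite /sshift /wser /sexp /sone /= !RealsE. field. exact: h. Qed.

Lemma sder_w rho : rho <> 0 -> sder (wser rho) = sadd sone (sscal (- rho) (wser rho)).
Proof.
move=> /eqP h; apply: functional_extensionality => n.
rewrite /sder /sadd /sscal /wser /sexp !RealsE.
rewrite [sone n.+1]/= R0E.
rewrite factS natrM exprS.
have h2 : (n`!)%:R != 0 :> R by rewrite pnatr_eq0 -lt0n fact_gt0.
have h1 : (n.+1)%:R != 0 :> R by rewrite pnatr_eq0.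
field. by rewrite h h2 /= addrC natr1.
Qed.

Lemma sder_pow w m : sder (spow w m.+1) = sscal m.+1%:R (smul (spow w m) (sder w)).
Proof.
elim: m => [|m IH].
  rewrite /= smul1r smul1l; apply: functional_extensionality => n; by rewrite /sscal mul1r.
rewrite [spow w m.+2]/= sder_mul IH smulZr -(smulA w (spow w m)) -/(spow w m.+1).
rewrite (smulC (sder w) (spow w m.+1)).
apply: functional_extensionality => n; rewrite /sadd /sscal.
rewrite -[(m.+2)%:R]/((m.+1).+1%:R) mulrS; ring.
Qed.

Lemma S2_low n m : (n < m)%N -> S2 n m = 0%N.
Proof.
elim: n m => [|n IH] [|m] h //=.
rewrite !IH //; lia.
Qed.

Lemma core rho : rho <> 0 -> forall m n,
  spow (wser rho) m n * (n`!)%:R = (S2 n m)%:R * (- rho) ^+ (n - m) * (m`!)%:R.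
Proof.
move=> hr; set w := wser rho.
have rec : forall m n, n.+1%:R * spow w m.+1 n.+1
     = m.+1%:R * (spow w m n + - rho * spow w m.+1 n).
  move=> m n.
  have := congr1 (fun f => f n) (sder_pow w m).
  rewrite sder_w // smulDr smul1r smulZr (smulC _ w) -/(spow w m.+1).
  by rewrite /sder /sscal /sadd => ->.
elim=> [|m IH] n.
  case: n => [|n] /=; first by rewrite subn0 !mul1r.
  by rewrite R0E !mul0r.
elim: n => [|n IHn].
  rewrite spow_low //; last exact: w0.
  by rewrite mul0r /= !mul0r.
have E : spow w m.+1 n.+1 * (n.+1)`!%:R = m.+1%:R * (spow w m n * n`!%:R)
      + m.+1%:R * (- rho) * (spow w m.+1 n * n`!%:R).
  rewrite factS natrM.
  transitivity ((n.+1%:R * spow w m.+1 n.+1) * n`!%:R); first ring.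
  rewrite rec; ring.
rewrite E IH IHn.
rewrite -[S2 n.+1 m.+1]/(m.+1 * S2 n m.+1 + S2 n m)%N subSS natrD natrM factS natrM.
case: (ltnP m n) => hmn.
  have -> : (n - m = (n - m.+1).+1)%N by lia.
  rewrite exprS; ring.
rewrite (S2_low n m.+1); last lia.
ring.
Qed.

Definition cc k q m : R := Rinv (powerRZ (qnum q m.+1) k).
Definition T k q rho : ser := fun n => \sum_(m < n.+1) cc k q m * spow (wser rho) m n.

Lemma widen (F : nat -> R) p N : (p < N)%N -> (forall m, (p < m)%N -> F m = 0) ->
  \sum_(m < p.+1) F m = \sum_(m < N) F m.
Proof.
move=> hN hF.
rewrite -(big_mkord xpredT) -(big_mkord xpredT F) (@big_cat_nat _ _ _ p.+1 0 N _ _ (leq0n _) hN) /=.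
rewrite [X in _ = _ + X]big1_seq ?addr0 // => m /andP[_].
rewrite mem_index_iota => /andP[h1 _]; exact: hF.
Qed.

Lemma L_eq k q rho : rho <> 0 ->
  sshift (Li_ser k q (wser rho)) = smul (sshift (wser rho)) (T k q rho).
Proof.
move=> hr; set w := wser rho.
have hw : w 0%N = 0 by exact: w0.
apply: functional_extensionality => n.
rewrite {1}/sshift /Li_ser /scomp sumRE big_ord_recl.
have Z : Li_coef k q 0 = 0 by [].
rewrite ?RmultE ?RplusE Z mul0r add0r.
rewrite [RHS]smulE /T.
transitivity (\sum_(i < n.+1) cc k q i * \sum_(j < n.+1) sshift w j * spow w i (n - j)%N).
  apply: eq_bigr => i _; rewrite /bump /=.
  by rewrite smul_shift // smulE.
rewrite [RHS](eq_bigr (fun j : 'I_n.+1 => sshift w j *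
   \sum_(m < n.+1) cc k q m * spow w m (n - j)%N)); last first.
  move=> j _; congr (_ * _); apply: (widen (fun m => cc k q m * spow w m (n - j)%N)); first by have := ltn_ord j; lia.
  move=> m hm; rewrite spow_low ?mulr0 //.
rewrite [LHS](eq_bigr (fun i : 'I_n.+1 => \sum_(j < n.+1) cc k q i * (sshift w j * spow w i (n - j)%N))); last first.
  by move=> i _; rewrite mulr_sumr.
rewrite exchange_big /=; apply: eq_bigr => j _; rewrite mulr_sumr; apply: eq_bigr => i _.
by rewrite mulrCA.
Qed.

Lemma sexp0 : sexp (- 0) = sone.
Proof.
apply: functional_extensionality => -[|n]; rewrite /sexp /= !RealsE.
  by rewrite invr1 mulr1.
by rewrite oppr0 mul0r mul0r.
Qed.

Local Open Scope R_scope.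
Lemma main n k rho q : rho <> 0 ->
  qPB n k rho q 0 =
  sumR (S n) (fun m => INR (S2 n m) * (- rho) ^ (n - m) * INR (fact m)
                       / powerRZ (qnum q (S m)) k).
Proof.
move=> hr.
rewrite /qPB /qPB_gen sexp0 smul1r L_eq // -smulA (smulC (sinv _)) smul_sinv; last first.
  rewrite v0 //; exact: R1_neq_R0.
rewrite smul1l sumRE /T.
rewrite !RealsE mulr_sumr; apply: eq_bigr => m _.
have C := core rho hr m n.
rewrite !RealsE /cc.
rewrite -C RinvE; ring.
Qed.

Local Notation "x - y" := (Nat.sub x y) : nat_scope.
Open Scope R_scope.

Theorem corollary1 (n : nat) (k : Z) (rho q : R) :
  rho <> 0 -> 0 <= q < 1 ->
  qPB n k rho q 0 =
  sumR (S n) (fun m => INR (S2 n m) * (- rho) ^ (n - m) * INR (fact m)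
                       / powerRZ (qnum q (S m)) k).
Proof.
  intros hr _; exact (main n k rho q hr).
Qed.
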